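(* Let $\ell\in\mathbb{Z}_{\ge 2}$ and let $a_{n,m}$ and $b_{n,m}=b_{n,m}(\ell)$ be as in the context. Then $$\sum_{\substack{m\ge0,\ m\equiv \ell-2\bmod\ell\\ n\ge \ell-2}} b_{n,m}x^n \;=\; \frac{1+x\sum_{\substack{m\ge0,\ m\equiv \ell-1\bmod\ell\\ n\ge \ell-1}} a_{n,m}x^n}{x\,U_{\ell-1}\big(\tfrac{1}{2x}\big)}.$$
   Context: $U_j$ is the $j$th Chebyshev polynomial of the second kind: $U_0(x)=1$, $U_1(x)=2x$, $U_j(x)=2xU_{j-1}(x)-U_{j-2}(x)$. For $n,m\in\mathbb{Z}_{\ge 0}$, $a_{n,m}$ is the number of unit step paths $(x_0,\dots,x_n)$ on $\mathbb{Z}_{\ge0}$ (integers $x_i\ge0$, $|x_i-x_{i-1}|=1$) with $x_0=0$, $x_n=m$. For fixed $\ell\in\mathbb{Z}_{\ge2}$, $b_{n,m}=b_{n,m}(\ell)$ is defined by: $b_{n,m}=a_{n,m}$ if $m\equiv-1\pmod\ell$; $b_{n,m}=b_{n-1,m-1}+b_{n-1,m+1}$ if $m\equiv m_0\pmod\ell$ with $0\le m_0<\ell-2$; $b_{n,m}=b_{n-1,m-1}$ if $m\equiv-2\pmod\ell$; the recursion is used for $n\ge1$ with $b_{0,0}=1$, $b_{0,m}=0$ for $m>0$, and $b_{n,-1}=0$. The identity is one of formal Laurent series in $x$ (the right-hand side being expanded as a power series in $x$). *)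

(* Defs.v *)
From HB Require Import structures.
From mathcomp Require Import all_boot all_order all_algebra.
Set Implicit Arguments. Unset Strict Implicit. Unset Printing Implicit Defensive.
Import Order.TTheory GRing.Theory Num.Theory.
Local Open Scope ring_scope.

Fixpoint Ucheb (j : nat) : {poly rat} :=
  match j with
  | 0%N => 1
  | 1%N => 2%:R *: 'X
  | (S ((S j'') as j')) => 2%:R *: 'X * Ucheb j' - Ucheb j''
  end.

Definition stepPos (n : nat) (s : {ffun 'I_n -> bool}) (k : nat) : int :=
  \sum_(i < n | (i < k)%N) (if s i then 1 else -1).

(* a_{n,m}: number of unit step paths (x_0,...,x_n) on Z_{>=0} with x_0 = 0, x_n = m;
   such a path is determined by its sequence of n steps. *)
Definition apath (n m : nat) : nat :=
  #|[pred s : {ffun 'I_n -> bool} |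
      [forall k : 'I_n.+1, 0 <= stepPos s k] && (stepPos s n == m%:Z)]|.

(* b_{n,m}(l), with the convention b_{n,-1} = 0. *)
Fixpoint bcount (l n m : nat) {struct n} : nat :=
  if (m %% l == l - 1)%N then apath n m
  else match n with
       | 0%N => (m == 0%N : nat)
       | S n' =>
         let left := (if m is S m' then bcount l n' m' else 0%N) in
         if (m %% l == l - 2)%N then left
         else (left + bcount l n' m.+1)%N
       end.

(* Formal Laurent series over rat: x^v * (sum_k s k x^k). *)
Record laurent := Laurent { lval : int; lser : nat -> rat }.

Definition lcoef (f : laurent) (n : int) : rat :=
  match n - lval f with Posz k => lser f k | Negz _ => 0 end.

Definition lmul (f g : laurent) : laurent :=
  Laurent (lval f + lval g)
          (fun n => \sum_(k < n.+1) lser f k * lser g (n - k)%N).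

Definition leqL (f g : laurent) : Prop := forall n : int, lcoef f n = lcoef g n.

Definition lX : laurent := Laurent 1 (fun k => if k == 0%N then 1 else 0).

(* p(c/x) as a Laurent (poly)nomial in x, for p : {poly rat} of degree d:
   sum_{i<=d} p_i c^i x^{-i} = x^{-d} sum_{j<=d} p_{d-j} c^{d-j} x^j. *)
Definition poly_at_cinv (p : {poly rat}) (c : rat) : laurent :=
  let d := (size p).-1 in
  Laurent (- (d%:Z)) (fun j => if (j <= d)%N then p`_(d - j) * c ^+ (d - j) else 0).

(* LHS: sum over m >= 0, m = l-2 mod l, n >= l-2 of b_{n,m} x^n.
   (b_{n,m} = 0 for m > n, so the inner sum over m is over m <= n.) *)
Definition lhs_series (l : nat) : laurent :=
  Laurent 0 (fun n => if (l - 2 <= n)%N then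
                        \sum_(m < n.+1 | (m %% l == l - 2)%N) ((bcount l n m)%:R : rat)
                      else 0).

(* Numerator: 1 + x * sum over m = l-1 mod l, n >= l-1 of a_{n,m} x^n. *)
Definition num_series (l : nat) : laurent :=
  Laurent 0 (fun n => match n with
                      | 0%N => 1
                      | S n' => if (l - 1 <= n')%N then
                                  \sum_(m < n'.+1 | (m %% l == l - 1)%N) ((apath n' m)%:R : rat)
                                else 0
                      end).

Definition den_series (l : nat) : laurent :=
  lmul lX (poly_at_cinv (Ucheb l.-1) (2%:R)^-1).

(* Main.v *)
Require Import Defs.
From HB Require Import structures.
From mathcomp Require Import all_boot all_order all_algebra.
From mathcomp Require Import zify ring lra.
Import Order.TTheory GRing.Theory Num.Theory.
Local Open Scope ring_scope.

Arguments Ucheb : simpl never.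
Lemma UchebSS j : Ucheb j.+2 = 2%:R *: 'X * Ucheb j.+1 - Ucheb j.
Proof. by []. Qed.

Lemma coef2X (p : {poly rat}) i : (2%:R *: 'X * p)`_i = if i is i'.+1 then 2 * p`_i' else 0.
Proof. by rewrite -scalerAl coefZ coefXM; case: i => [|i] /=; rewrite ?mulr0. Qed.

Lemma Ucheb_size j : (size (Ucheb j) <= j.+1)%N.
Proof.
elim/ltn_ind: j => -[|[|j]] IH.
- by rewrite /Ucheb size_poly1.
- by rewrite /Ucheb -mul_polyC size_mul ?polyC_eq0 // ?size_polyC ?size_polyX // polyX_eq0.
- rewrite UchebSS; apply/leq_sizeP => i hi.
  rewrite coefB coef2X; case: i hi => [//|i] hi.
  have /leq_sizeP -> := IH j.+1 (ltnSn _); last by [].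
  have /leq_sizeP -> := IH j (leqW (ltnSn _)); last by lia.
  by rewrite mulr0 subr0.
Qed.

Lemma Ucheb_lead j : (Ucheb j)`_j = 2%:R ^+ j.
Proof.
elim/ltn_ind: j => -[|[|j]] IH.
- by rewrite /Ucheb coefC.
- by rewrite /Ucheb coefZ coefX mulr1.
- rewrite UchebSS coefB coef2X IH //.
  have /leq_sizeP -> := Ucheb_size j; last by lia.
  by rewrite subr0 [RHS]exprS.
Qed.

Lemma Ucheb_size_eq j : size (Ucheb j) = j.+1.
Proof.
apply/eqP; rewrite eqn_leq Ucheb_size /=.
rewrite ltnNge; apply/negP => /leq_sizeP /(_ j (leqnn _)).
by rewrite Ucheb_lead => /eqP; rewrite expf_eq0 andbC pnatr_eq0.
Qed.

Definition q (N j : nat) : rat :=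
  if (j <= N)%N then (Ucheb N)`_(N - j) * (2%:R^-1)^+(N-j) else 0.

Definition shn (a : nat) (s : nat -> rat) : nat -> rat :=
  fun n => if (a <= n)%N then s (n - a)%N else 0.

Lemma q0 i : q 0 i = (i == 0)%:R.
Proof. by rewrite /q; case: i => [|i] //=; rewrite coefC /= mulr1. Qed.

Lemma q1 i : q 1 i = (i == 0)%:R.
Proof.
rewrite /q; case: i => [|[|i]] //=.
  by rewrite coefZ coefX /= mulr1 expr1 mulfV.
by rewrite coefZ coefX /= mulr0 mul0r.
Qed.

Lemma qSS j i : q j.+2 i = q j.+1 i - shn 2 (q j) i.
Proof.
rewrite /q /shn UchebSS.
case: (leqP i j.+2) => hi.
  rewrite coefB coef2X.
  case: (leqP i j.+1) => hi1.
    rewrite subSn //.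
    case: (leqP 2 i) => h2.
      rewrite (_ : (i - 2 <= j)%N); last by lia.
      rewrite (_ : (j - (i - 2) = (j.+1 - i).+1)%N); last by lia.
      rewrite !exprS; by field.
    have /leq_sizeP -> := Ucheb_size j; last by lia.
    move: (Ucheb j.+1)`_(j.+1 - i) (j.+1 - i)%N => u t.
    rewrite exprS !subr0; by field.
  have -> : i = j.+2 by lia.
  rewrite subnn (_ : (j.+2 - 2 = j)%N) ?leqnn ?subnn /=; last by lia.
  by rewrite !expr0 !mulr1.
rewrite (_ : (i <= j.+1)%N = false); last by lia.
have h2 : (2 <= i)%N by lia.
have h3 : (i - 2 <= j)%N = false by lia.
by rewrite h2 h3 subrr.
Qed.

Definition conv (c s : nat -> rat) (n : nat) : rat := \sum_(i < n.+1) s i * c (n - i)%N.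

Lemma conv_ext c c' s n : (forall i, c i = c' i) -> conv c s n = conv c' s n.
Proof. by move=> h; apply: eq_bigr => i _; rewrite h. Qed.

Lemma conv_B c c' s n : conv (fun i => c i - c' i) s n = conv c s n - conv c' s n.
Proof. by rewrite /conv -sumrB; apply: eq_bigr => i _; rewrite mulrBr. Qed.

Lemma conv_sum (K : nat) c (s : nat -> nat -> rat) n :
  conv c (fun m => \sum_(k < K) s k m) n = \sum_(k < K) conv c (s k) n.
Proof.
rewrite /conv exchange_big /=; apply: eq_bigr => i _; by rewrite mulr_suml.
Qed.

Lemma conv_delta c s n : (forall i, c i = (i == 0)%:R) -> conv c s n = s n.
Proof.
move=> h; rewrite /conv big_ord_recr /= subnn h mulr1 big1 ?add0r // => i _.
by rewrite h (_ : (n - i == 0)%N = false) ?mulr0 //; have := ltn_ord i; lia.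
Qed.

Lemma shn_ext a s s' n : (forall m, s m = s' m) -> shn a s n = shn a s' n.
Proof. by move=> h; rewrite /shn h. Qed.

Lemma shn_add a b s n : shn a (shn b s) n = shn (a + b) s n.
Proof.
rewrite /shn; case: (leqP a n) => h1; case: (leqP (a + b) n) => h2;
  case: (leqP b (n - a)) => h3 //; try lia.
by rewrite subnDA.
Qed.

Lemma shn0 s n : shn 0 s n = s n.
Proof. by rewrite /shn subn0. Qed.

Lemma shn_B a s s' n : shn a (fun m => s m - s' m) n = shn a s n - shn a s' n.
Proof. by rewrite /shn; case: ifP; rewrite ?subr0. Qed.

Lemma conv_shn1 c s n : conv (shn 1 c) s n = shn 1 (conv c s) n.
Proof.
rewrite /conv /shn; case: n => [|n] /=.
  by rewrite big_ord_recr big_ord0 /= add0r mulr0.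
rewrite big_ord_recr /= subnn mulr0 addr0 subn1 /=; apply: eq_bigr => i _.
have hi := ltn_ord i.
have -> : (1 <= n.+1 - i)%N by lia.
by have -> : (n.+1 - i - 1 = n - i)%N by lia.
Qed.

Lemma conv_shn2 c s n : conv (shn 2 c) s n = shn 2 (conv c s) n.
Proof.
rewrite (@conv_ext _ (shn 1 (shn 1 c))); last by move=> i; rewrite shn_add.
rewrite conv_shn1 -(shn_add 1 1); apply: shn_ext => m; exact: conv_shn1.
Qed.

Lemma strip N (d : nat -> nat -> rat) :
 (forall n, d 0%N n = 0) ->
 (forall i, (0 < i < N)%N -> forall n, shn 1 (d i.+1) n = d i n - shn 1 (d i.-1) n) ->
 (0 < N)%N -> forall n,
 shn N.-1 (fun n => d N n - shn 1 (d N.-1) n) n = conv (q N) (d 1%N) n.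
Proof.
move=> d0 hrec hN.
suff: forall j, (0 < j <= N)%N ->
  (forall n, shn j.-1 (fun n => d j n - shn 1 (d j.-1) n) n = conv (q j) (d 1%N) n) /\
  (forall n, shn j.-1 (d j) n = conv (q j.-1) (d 1%N) n).
  by move=> /(_ N); rewrite hN leqnn => /(_ isT) [].
elim=> [//|[|j] IH] hj.
  split=> n; rewrite shn0.
    by rewrite /shn d0 if_same subr0 (conv_delta _ _ _ q1).
  by rewrite (conv_delta _ _ _ q0).
have [IHA IHB] := IH (ltac:(lia)).
have nB : forall n, shn j.+1 (d j.+2) n = conv (q j.+1) (d 1%N) n.
  move=> n; rewrite -IHA /=.
  have -> : shn j.+1 (d j.+2) n = shn j (shn 1 (d j.+2)) n by rewrite shn_add addn1.
  apply: shn_ext => m; apply: hrec; lia.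
split=> n /=.
  rewrite shn_B nB.
  have -> : shn j.+1 (shn 1 (d j.+1)) n = shn 2 (shn j (d j.+1)) n.
    by rewrite !shn_add addn1 add2n.
  rewrite (shn_ext 2 _ _ n IHB) -conv_shn2 -conv_B; apply: conv_ext => i.
  by rewrite qSS.
exact: nB.
Qed.
Lemma stepPos_le n (s : {ffun 'I_n -> bool}) : stepPos s n <= n%:Z.
Proof.
rewrite /stepPos (eq_bigl xpredT); last by move=> i; rewrite ltn_ord.
apply: le_trans (_ : \sum_(i < n) (1 : int) <= _).
  by apply: ler_sum => i _; case: (s i).
by rewrite sumr_const card_ord natz.
Qed.

Lemma apath_gt n m : (n < m)%N -> apath n m = 0%N.
Proof.
move=> h; rewrite /apath; apply: eq_card0 => s; rewrite inE.
apply/negP => /andP [_ /eqP e]; have := stepPos_le n s; rewrite e lez_nat; lia.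
Qed.

Lemma bcount_gt l n m : (n < m)%N -> bcount l n m = 0%N.
Proof.
elim: n m => [|n IH] m h /=; case: ifP => _; rewrite ?apath_gt //.
  by case: m h.
case: m h => [//|m] h; rewrite IH; last by lia.
by case: ifP => _; rewrite ?IH //; lia.
Qed.

Lemma bcount_a l n m : (m %% l == l - 1)%N -> bcount l n m = apath n m.
Proof. by move=> h; case: n => [|n] /=; rewrite h. Qed.

Lemma bcount_0 l m : (m %% l != l - 1)%N -> bcount l 0 m = (m == 0%N) :> nat.
Proof. by move=> h /=; rewrite (negbTE h). Qed.

Lemma bcount_S l n m : (m %% l != l - 1)%N -> bcount l n.+1 m =
  ((if m is m'.+1 then bcount l n m' else 0) +
   (if (m %% l == l - 2)%N then 0 else bcount l n m.+1))%N.
Proof. by move=> h /=; rewrite (negbTE h); case: ifP; rewrite ?addn0. Qed.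

Lemma modn_blk k l r : (r < l)%N -> ((k * l + r) %% l = r)%N.
Proof. by move=> h; rewrite modnMDl modn_small. Qed.

Definition dblk l k j n : rat :=
  if j == 0%N then 0 else (bcount l n (k * l + (l.-1 - j)))%:R.

Lemma dblk_rec l k (hl : (2 <= l)%N) i : (0 < i < l.-1)%N -> forall n,
  shn 1 (dblk l k i.+1) n = dblk l k i n - shn 1 (dblk l k i.-1) n.
Proof.
move=> hi [|n].
  rewrite /shn /= subr0 /dblk (_ : (i == 0)%N = false); last by lia.
  rewrite bcount_0; last by rewrite modn_blk; lia.
  by rewrite (_ : (k * l + (l.-1 - i) == 0)%N = false) //; lia.
rewrite /shn /= !subn1 /= /dblk (_ : (i == 0)%N = false); last by lia.
rewrite (_ : (i.+1 == 0)%N = false) // bcount_S; last by rewrite modn_blk; lia.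
have -> : (k * l + (l.-1 - i) = (k * l + (l.-1 - i.+1)).+1)%N by lia.
rewrite -addnS modn_blk; last by lia.
case: (eqVneq i 1) => [->|h1] /=.
  by rewrite (_ : (l.-1 - 2).+1 == l - 2)%N ?addn0 ?subr0 //; lia.
rewrite (_ : ((l.-1 - i.+1).+1 == l - 2)%N = false); last by lia.
rewrite (_ : (i.-1 == 0)%N = false); last by lia.
rewrite (_ : ((k * l + (l.-1 - i.+1).+1).+1 = k * l + (l.-1 - i.-1))%N); last by lia.
by rewrite natrD addrK.
Qed.

Definition Fblk l k n : rat := dblk l k l.-1 n - shn 1 (dblk l k l.-2) n.

Lemma Fblk0 l k (hl : (2 <= l)%N) : Fblk l k 0 = (k == 0%N)%:R.
Proof.
rewrite /Fblk /shn /= subr0 /dblk (_ : (l.-1 == 0)%N = false); last by lia.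
rewrite subnn addn0 bcount_0; last by rewrite modnMl; lia.
by rewrite muln_eq0 (_ : (l == 0)%N = false) ?orbF //; lia.
Qed.

Lemma FblkS l k (hl : (2 <= l)%N) n :
  Fblk l k n.+1 = if k is k'.+1 then (apath n (k' * l + l.-1))%:R else 0.
Proof.
rewrite /Fblk /shn /= subn1 /= /dblk (_ : (l.-1 == 0)%N = false); last by lia.
rewrite subnn addn0 bcount_S; last by rewrite modnMl; lia.
rewrite modnMl natrD.
have -> : (if 0%N == (l - 2)%N then 0%N else bcount l n (k * l).+1)%:R =
   (if (l.-2 == 0)%N then 0 else (bcount l n (k * l + (l.-1 - l.-2)))%:R) :> rat.
  rewrite (_ : (0 == l - 2)%N = (l.-2 == 0)%N); last by lia.
  case: ifP => // _; do 2 f_equal; lia.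
rewrite addrK; case: k => [|k] //.
rewrite (_ : (k.+1 * l = (k * l + l.-1).+1)%N); last by lia.
by rewrite bcount_a // modn_blk; lia.
Qed.


Lemma reindex (l r B K : nat) (g : nat -> rat) : (0 < l)%N -> (r < l)%N -> (B < K)%N ->
  (forall m, (B < m)%N -> g m = 0) ->
  \sum_(m < B.+1 | (m %% l == r)%N) g m = \sum_(k < K) g (k * l + r)%N.
Proof.
move=> l0 rl BK gz.
pose F m := if (m %% l == r)%N then g m else 0.
have hBK : (B.+1 <= K * l)%N by rewrite (leq_trans BK) // leq_pmulr.
rewrite big_mkcond /= -/F (big_ord_widen (K * l) F hBK) big_mkcond /=.
rewrite (eq_bigr (fun i : 'I_(K * l) => F i)); last first.
  move=> i _; case: ifP => // h; rewrite /F gz ?if_same //; lia.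
clear BK hBK gz; elim: K => [|K IH].
  by rewrite mul0n !big_ord0.
rewrite mulSnr big_split_ord /= IH big_ord_recr /=; congr (_ + _).
rewrite (bigD1 (Ordinal rl)) //= big1 ?addr0.
  by rewrite /F modn_blk // eqxx.
move=> i /eqP hi; rewrite /F modn_blk //; case: eqP => // e; exfalso; apply: hi.
by apply: val_inj.
Qed.

Lemma conv_ext_s c s s' n : (forall i, (i <= n)%N -> s i = s' i) -> conv c s n = conv c s' n.
Proof. by move=> h; apply: eq_bigr => i _; rewrite h // -ltnS. Qed.

Lemma shn_sum a K (s : nat -> nat -> rat) n :
  shn a (fun m => \sum_(k < K) s k m) n = \sum_(k < K) shn a (s k) n.
Proof. by rewrite /shn; case: ifP => //; rewrite big1. Qed.

Lemma shn_ext_le a s s' n : (forall m, (m <= n)%N -> s m = s' m) -> shn a s n = shn a s' n.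
Proof. by move=> h; rewrite /shn; case: ifP => // _; rewrite h // leq_subr. Qed.

Lemma lhs_eq l (hl : (2 <= l)%N) i K : (i < K)%N ->
  lser (lhs_series l) i = \sum_(k < K) dblk l k 1 i.
Proof.
move=> iK; rewrite /= /dblk /=.
have e : (l.-1 - 1 = l - 2)%N by lia.
case: ifP => h.
  rewrite (reindex l (l - 2) i K (fun m => (bcount l i m)%:R)) //; first last.
  - by move=> m hm; rewrite bcount_gt.
  - lia.
  - lia.
  by apply: eq_bigr => k _; rewrite e.
rewrite big1 // => k _; rewrite bcount_gt //; lia.
Qed.

Lemma num_eq l (hl : (2 <= l)%N) p K : (p < K)%N ->
  lser (num_series l) p = \sum_(k < K) Fblk l k p.
Proof.
case: K => [//|K] pK.
rewrite big_ord_recl.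
case: p pK => [|n] pK.
  rewrite Fblk0 // big1 ?addr0 // => k _; rewrite Fblk0 //.
rewrite FblkS // add0r.
under eq_bigr => k _ do rewrite lift0 FblkS //.
have e : (l.-1 = l - 1)%N by lia.
rewrite /=; case: ifP => h.
  rewrite (reindex l (l - 1) n K (fun m => (apath n m)%:R)) //; first last.
  - by move=> m hm; rewrite apath_gt.
  - lia.
  - lia.
  by apply: eq_bigr => k _; rewrite e.
rewrite big1 // => k _; rewrite apath_gt //; lia.
Qed.

Theorem lemma2p10 (l : nat) (hl : (2 <= l)%N) :
  leqL (lmul (lhs_series l) (den_series l)) (num_series l).
Proof.
have den : forall j, lser (den_series l) j = q l.-1 j.
  move=> j; rewrite /den_series /lmul /= big_ord_recl /= mul1r big1 ?addr0.
    by rewrite /q Ucheb_size_eq /= subn0.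
  by move=> i _; rewrite mul0r.
have key : forall n, \sum_(i < n.+1) lser (lhs_series l) i * lser (den_series l) (n - i)
   = shn l.-2 (lser (num_series l)) n.
  move=> n.
  transitivity (conv (q l.-1) (lser (lhs_series l)) n).
    by apply: eq_bigr => i _; rewrite den.
  rewrite (conv_ext_s _ _ (fun i => \sum_(k < n.+1) dblk l k 1 i)); last first.
    by move=> i hi; apply: lhs_eq; lia.
  rewrite (conv_sum n.+1 _ (fun k m => dblk l k 1 m)).
  rewrite (shn_ext_le _ _ (fun m => \sum_(k < n.+1) Fblk l k m)); last first.
    by move=> m hm; apply: num_eq; lia.
  rewrite (shn_sum _ n.+1 (fun k m => Fblk l k m)); apply: eq_bigr => k _.
  symmetry; rewrite /Fblk; apply: (strip l.-1 (dblk l k)).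
  - by move=> m; rewrite /dblk.
  - exact: dblk_rec.
  - lia.
move=> z.
have lv : lval (lmul (lhs_series l) (den_series l)) = 1 - (l.-1)%:Z.
  by rewrite /= Ucheb_size_eq /= add0r.
have lv2 : lval (num_series l) = 0 by [].
rewrite /lcoef lv lv2 subr0.
case: l hl {den key lv lv2} (key) => [|[|L]] // _ key.
case E: (z - (1 - (L.+2.-1)%:Z)) => [k|k].
  have lk : lser (lmul (lhs_series L.+2) (den_series L.+2)) k =
    \sum_(i < k.+1) lser (lhs_series L.+2) i * lser (den_series L.+2) (k - i) by [].
  rewrite lk key /shn /=.
  case: ifP => hk.
    by have -> : z = Posz (k - L) by lia.
  case: z E => p E //; lia.
case: z E => p E //; lia.
Qed.
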